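(* Let $\mathcal M(\mathcal P,<)$ be a Morse decomposition of an isolated invariant set $S$, let $\{N(I): I\subset\mathcal P\text{ an attracting interval}\}$ be a Morse set filtration for $\mathcal M(\mathcal P,<)$, and let $J\subset I$ be attracting intervals. Then $(N(I),N(J))$ is a filtration pair for $M_{I\setminus J}$.
   Context: Let $X$ be a locally compact metric space, $U\subset X$ open and $f:U\to X$ continuous. A solution through $x$ is a map $\sigma:\mathbb Z\to U$ with $\sigma(0)=x$ and $f(\sigma(n))=\sigma(n+1)$ for all $n$; for $N\subset U$, $\operatorname{Inv} N$ is the set of $x\in N$ admitting a solution through $x$ with all values in $N$. A compact $N\subset U$ is an isolating neighborhood if $\operatorname{Inv} N\subset\operatorname{Int} N$; $S$ is an isolated invariant set if $S=\operatorname{Inv} N$ for some isolating neighborhood $N$. The exit set of $N$ is $N^-=\{x\in N:f(x)\notin\operatorname{Int} N\}$. A filtration pair for an isolated invariant set $S$ is a pair of compact sets $L\subset N$ contained in the interior of the domain of $f$, each the closure of its interior, such that (1) $\operatorname{cl}(N\setminus L)$ is an isolating neighborhood with $\operatorname{Inv}\operatorname{cl}(N\setminus L)=S$; (2) $L$ is a neighborhood of $N^-$ in $N$; (3) $f(L)\cap\operatorname{cl}(N\setminus L)=\emptyset$. $\omega(x)=\bigcap_{K>0}\operatorname{cl}\big(\bigcup_{n>K}\{f^n(x)\}\big)$, $\omega(\sigma)=\omega(\sigma(0))$, $\alpha(\sigma)=\bigcap_{K>0}\operatorname{cl}\big(\bigcup_{n>K}\{\sigma(-n)\}\big)$. For $B,C\subset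 S$, $C(B,C;S)$ is the set of $x\in S\setminus(B\cup C)$ for which there is a solution $\sigma:\mathbb Z\to S$ through $x$ with $\alpha(\sigma)\subset B$ and $\omega(x)\subset C$. Let $\mathcal P$ be a finite set with a partial order $<$ (irreflexive, transitive). $I\subset\mathcal P$ is an interval if $p<r<q$, $p,q\in I$ imply $r\in I$, and an attracting interval if $r<q$, $q\in I$ imply $r\in I$. A collection $\{M_p\subset S:p\in\mathcal P\}$ of pairwise disjoint isolated invariant sets is a Morse decomposition of $S$ if for every $x\in S$ and every solution $\sigma:\mathbb Z\to S$ through $x$, either $\sigma(\mathbb Z)\subset M_p$ for some $p$, or $\omega(\sigma)\subset M_p$ and $\alpha(\sigma)\subset M_q$ for some $p<q$. For an interval $I$, $M_I=\bigcup_{p\in I}M_p\cup\bigcup_{q,r\in I}C(M_q,M_r;S)$. A Morse set filtration for $\mathcal M(\mathcal P,<)$ is a collection of compact sets $\{N(I)\subset X: I\text{ an attracting interval}\}$ such that for all attracting intervals $I,J$: (1) $(N(I),N(\emptyset))$ is a filtration pair for $M_I$; (2) $N(I)\cap N(J)=N(I\cap J)$; (3) $N(I)\cup N(J)=N(I\cup J)$. *)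

(* Defs.v *)
From HB Require Import structures.
From mathcomp Require Import all_boot all_order all_algebra.
From mathcomp Require Import all_classical all_reals all_analysis.
Set Implicit Arguments. Unset Strict Implicit. Unset Printing Implicit Defensive.
Import Order.TTheory GRing.Theory Num.Theory.
Local Open Scope classical_set_scope.
Local Open Scope ring_scope.

Section Dyn.
Variable T : topologicalType.
(* f : U -> T is modelled by a total map f : T -> T together with the open
   domain U; only the values of f on U are ever used. *)
Variables (U : set T) (f : T -> T).

Definition is_solution (sigma : int -> T) : Prop :=
  forall n : int, U (sigma n) /\ f (sigma n) = sigma (n + 1).

Definition solution_through (sigma : int -> T) (x : T) : Prop :=
  is_solution sigma /\ sigma 0 = x.

Definition Inv (N : set T) : set T :=
  [set x | N x /\ exists sigma, solution_through sigma x /\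
                                forall n : int, N (sigma n)].

Definition isolating_nbhd (N : set T) : Prop :=
  compact N /\ N `<=` U /\ Inv N `<=` interior N.

Definition isolated_invariant (S : set T) : Prop :=
  exists N, isolating_nbhd N /\ S = Inv N.

Definition exit_set (N : set T) : set T :=
  [set x | N x /\ ~ interior N (f x)].

Definition rel_nbhd_of (N L A : set T) : Prop :=
  exists O : set T, open O /\ A `<=` O /\ O `&` N `<=` L.

Definition filtration_pair (S N L : set T) : Prop :=
  compact N /\ compact L /\ L `<=` N /\
  N `<=` interior U (* = U, as U is open *) /\
  closure (interior N) = N /\ closure (interior L) = L /\
  (isolating_nbhd (closure (N `\` L)) /\ Inv (closure (N `\` L)) = S) /\
  rel_nbhd_of N L (exit_set N) /\
  (f @` L) `&` closure (N `\` L) = set0.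

Definition omega_limit (x : T) : set T :=
  \bigcap_(K in [set K : nat | (0 < K)%N])
     closure [set iter n f x | n in [set n : nat | (K < n)%N]].

Definition omega_sol (sigma : int -> T) : set T := omega_limit (sigma 0).

Definition alpha_sol (sigma : int -> T) : set T :=
  \bigcap_(K in [set K : nat | (0 < K)%N])
     closure [set sigma (- (n%:Z)) | n in [set n : nat | (K < n)%N]].

Definition connecting (B C S : set T) : set T :=
  [set x | (S `\` (B `|` C)) x /\
     exists sigma, solution_through sigma x /\
       (forall n : int, S (sigma n)) /\
       alpha_sol sigma `<=` B /\ omega_limit x `<=` C].

Section Morse.
Variables (P : finType) (lt : rel P).

Definition strict_partial_order : Prop :=
  irreflexive lt /\ transitive lt.

Definition interval (I : {set P}) : Prop :=
  forall p q r, p \in I -> q \in I -> lt p r -> lt r q -> r \in I.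

Definition attracting_interval (I : {set P}) : Prop :=
  forall r q, lt r q -> q \in I -> r \in I.

Definition morse_decomposition (S : set T) (M : P -> set T) : Prop :=
  [/\ forall p q, p != q -> M p `&` M q = set0,
      forall p, isolated_invariant (M p),
      forall p, M p `<=` S &
      forall x sigma, solution_through sigma x ->
        (forall n : int, S (sigma n)) ->
        (exists p, forall n : int, M p (sigma n)) \/
        (exists p q, lt p q /\ omega_sol sigma `<=` M p /\
                     alpha_sol sigma `<=` M q)].

Definition morse_set (S : set T) (M : P -> set T) (I : {set P}) : set T :=
  (\bigcup_(p in [set p | p \in I]) M p) `|`
  (\bigcup_(q in [set q | q \in I])
     \bigcup_(r in [set r | r \in I]) connecting (M q) (M r) S).

Definition morse_set_filtration (S : set T) (M : P -> set T)
    (N : {set P} -> set T) : Prop :=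
  forall I J, attracting_interval I -> attracting_interval J ->
    [/\ filtration_pair (morse_set S M I) (N I) (N finset.set0),
        N I `&` N J = N (I :&: J) &
        N I `|` N J = N (I :|: J)].

End Morse.
End Dyn.

(* Main.v *)
Require Import Defs.
From HB Require Import structures.
From mathcomp Require Import all_boot all_order all_algebra.
From mathcomp Require Import all_classical all_reals all_analysis.
From mathcomp Require Import zify.
Set Implicit Arguments. Unset Strict Implicit. Unset Printing Implicit Defensive.
Import Order.TTheory GRing.Theory Num.Theory.
Local Open Scope classical_set_scope.
Local Open Scope ring_scope.

Lemma int_ex (a i : int) : a <= i -> exists k : nat, i = a + k%:Z.
Proof. move=> h; exists `|i - a|%N. lia. Qed.

Lemma int_ex2 (m : int) (k : nat) : (`|m| < k)%N -> 0 <= m + k%:Z.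
Proof. move=> h. lia. Qed.

Section Gen.
Context (T : topologicalType) (U : set T) (f : T -> T).

Definition sol_in (N : set T) (s : int -> T) := is_solution U f s /\ forall n, N (s n).

Lemma sol_shift s k : is_solution U f s -> is_solution U f (fun n => s (n + k)).
Proof. move=> h n; have [a b] := h (n + k); split => //; rewrite b; congr s; lia. Qed.

Lemma Inv_shift N s k : sol_in N s -> Defs.Inv U f N (s k).
Proof.
move=> [hs hN]; split => //; exists (fun n => s (n + k)); split => //.
by split; [exact: sol_shift | rewrite add0r].
Qed.

Lemma iter_sol s n : is_solution U f s -> iter n f (s 0) = s n%:Z.
Proof.
move=> hs; elim: n => [|n IH] //=; rewrite IH; have [_ ->] := hs n; congr s; lia.
Qed.

Import ArrowAsProduct.

Lemma sol_cluster (hT : hausdorff_space T) (oU : open U)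
  (cf : {within U, continuous f}) (N : set T) (cN : compact N) (NU : N `<=` U)
  (s : nat -> int -> T) : (forall k, sol_in N (s k)) ->
  exists tau, sol_in N tau /\ forall m k0,
    closure [set s k m | k in [set k | (k0 < k)%N]] (tau m).
Proof.
move=> hs.
pose K := [set g : int -> T | forall i, N (g i)].
have cK : compact K := tychonoff (fun _ : int => cN).
have FK : (s @ \oo) K by exists 0%N => // k _; exact: (hs k).2.
have [tau [Ktau cltau]] := cK _ _ FK.
have cfin : {in U, continuous f} by rewrite -continuous_open_subspace.
exists tau; split; last first.
  move=> m k0 B nB.
  have nV : nbhs tau (proj m @^-1` B) by exact: proj_continuous.
  have FE : (s @ \oo) (s @` [set k | (k0 < k)%N]).
    by apply: filterS (nbhs_infty_gt k0) => k hk; exists k.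
  have [g [ [k hk <-] Vg]] := cltau _ _ FE nV.
  by exists (s k m); split => //; exists k.
split => // n; split; first exact/NU/Ktau.
apply: hT => A B nA nB.
have Un : U (tau n) by exact/NU/Ktau.
have nW : nbhs (tau n) (f @^-1` A).
  by have := cfin (tau n); rewrite inE => /(_ Un); apply.
have nV : nbhs tau (proj n @^-1` (f @^-1` A) `&` proj (n + 1) @^-1` B).
  by apply: filterI; apply: proj_continuous.
have FE : (s @ \oo) (range s) by exists 0%N => // k _; exists k.
have [g [ [k _ <-] [Vg1 Vg2]]] := cltau _ _ FE nV.
exists (s k (n + 1)); split => //.
by have [_ <-] := (hs k).1 n.
Qed.

Section Cor.
Context (hT : hausdorff_space T) (oU : open U) (cf : {within U, continuous f})
  (N : set T) (cN : compact N) (NU : N `<=` U).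

Lemma fwd_cluster s : sol_in N s -> exists tau, sol_in N tau /\ forall m k0,
    closure [set s (m + k%:Z) | k in [set k | (k0 < k)%N]] (tau m).
Proof.
move=> hs; apply: (sol_cluster hT oU cf cN NU (s := fun k m => s (m + k%:Z))).
move=> k; split; first exact: sol_shift _ hs.1.
by move=> n; exact: hs.2.
Qed.

Lemma bwd_cluster s : sol_in N s -> exists tau, sol_in N tau /\ forall m k0,
    closure [set s (m - k%:Z) | k in [set k | (k0 < k)%N]] (tau m).
Proof.
move=> hs; apply: (sol_cluster hT oU cf cN NU (s := fun k m => s (m - k%:Z))).
move=> k; split; first exact: sol_shift _ hs.1.
by move=> n; exact: hs.2.
Qed.
End Cor.

Lemma omega_of s z : is_solution U f s ->
  (forall k0, closure [set s (0 + k%:Z) | k in [set k | (k0 < k)%N]] z) ->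
  omega_limit f (s 0) z.
Proof.
move=> hs h K0 _; apply: closureS (h K0) => y [k hk <-].
by exists k => //; rewrite iter_sol // add0r.
Qed.

Lemma alpha_of (s : int -> T) (z : T) :
  (forall k0, closure [set s (0 - k%:Z) | k in [set k | (k0 < k)%N]] z) ->
  alpha_sol s z.
Proof.
move=> h K0 _; apply: closureS (h K0) => y [k hk <-].
by exists k => //; rewrite sub0r.
Qed.

End Gen.

Lemma closure_sub_closed (T : topologicalType) (C : set T) (g : nat -> T) k0 :
  closed C -> (forall k, (k0 < k)%N -> C (g k)) ->
  closure [set g k | k in [set k | (k0 < k)%N]] `<=` C.
Proof.
move=> cC h; rewrite [X in _ `<=` X](closure_id C).1 //.
by apply: closureS => y [k hk <-]; exact: h.
Qed.

Lemma interior_closure_disj (T : topologicalType) (A C : set T) x :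
  A° x -> closure C x -> C `<=` ~` A -> False.
Proof.
move=> hA hC hCA; have [y [Cy Ay]] := hC _ hA.
exact: hCA Cy Ay.
Qed.

Lemma closure_sub_closed2 (T : topologicalType) (A C : set T) :
  closed C -> A `<=` C -> closure A `<=` C.
Proof.
by move=> cC h; rewrite [X in _ `<=` X](closure_id C).1 //; apply: closureS.
Qed.

Section Main.
Context (R : realType) (X : pseudoMetricType R) (U : set X) (f : X -> X)
  (P : finType) (lt : rel P) (S : set X) (M : P -> set X)
  (N : {set P} -> set X).
Hypotheses (hX : hausdorff_space X) (oU : open U)
  (cf : {within U, continuous f}) (iS : isolated_invariant U f S)
  (md : morse_decomposition U f lt S M)
  (mf : morse_set_filtration U f lt S M N).

Local Notation N0 := (N finset.set0).
Local Notation attr := (attracting_interval lt).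
Local Notation MS := (morse_set U f S M).

Lemma attr0 : attr finset.set0. Proof. by move=> r q _; rewrite inE. Qed.
Lemma attrT : attr [set: P]. Proof. by move=> r q _; rewrite inE. Qed.

Lemma fpK K : attr K -> filtration_pair U f (MS K) (N K) N0.
Proof. by move=> hK; case: (mf hK hK). Qed.

Lemma cNK K : attr K -> compact (N K).
Proof. by move=> /fpK [h _]. Qed.

Lemma clNK K : attr K -> closed (N K).
Proof. by move=> /cNK; exact: compact_closed. Qed.

Lemma N0K K : attr K -> N0 `<=` N K.
Proof. by move=> /fpK [_ [_ [h _]]]. Qed.

Lemma NKU K : attr K -> N K `<=` U.
Proof. by move=> /fpK [_ [_ [_ [h _]]]] x /h /interior_subset. Qed.

Lemma isoK K : attr K -> isolating_nbhd U f (closure (N K `\` N0)).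
Proof. by move=> /fpK [_ [_ [_ [_ [_ [_ [ [h _] _]]]]]]]. Qed.

Lemma InvK K : attr K -> Defs.Inv U f (closure (N K `\` N0)) = MS K.
Proof. by move=> /fpK [_ [_ [_ [_ [_ [_ [ [_ h] _]]]]]]]. Qed.

Lemma exitK K : attr K -> exit_set f (N K) `<=` N0.
Proof.
move=> /fpK [_ [_ [_ [_ [_ [_ [_ [hrel _]]]]]]]] x hx.
case: hrel => O1 [_ [eO sO]].
by apply: sO; split; [exact: eO | case: hx].
Qed.

Lemma fN0K K : attr K -> forall x, N0 x -> ~ closure (N K `\` N0) (f x).
Proof.
move=> /fpK [_ [_ [_ [_ [_ [_ [_ [_ h]]]]]]]] x x0 hfx.
have : (f @` N0 `&` closure (N K `\` N0)) (f x) by split => //; exists x.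
by rewrite h.
Qed.

Lemma monoN K K' : attr K -> attr K' -> K \subset K' -> N K `<=` N K'.
Proof.
move=> hK hK' sub; case: (mf hK hK') => _ hI _.
by move: hI; rewrite (finset.setIidPl sub) => <- x [].
Qed.

Lemma A_sub K : attr K -> closure (N K `\` N0) `<=` N K.
Proof. by move=> hK; apply: closure_sub_closed2 (clNK hK) _ => x []. Qed.

Lemma MS_int K x : attr K -> MS K x -> (N K)° x.
Proof.
move=> hK; rewrite -(InvK hK) => hx; have [_ [_ isub]] := isoK hK.
by apply: interiorS (isub x hx); exact: A_sub.
Qed.

Lemma MS_notN0 K x : attr K -> MS K x -> ~ N0 x.
Proof.
move=> hK; rewrite -(InvK hK) => -[_ [s [ [hs s0] hN]]] hx0.
apply: (fN0K hK hx0); rewrite -s0; have [_ ->] := hs 0; rewrite add0r.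
exact: hN 1.
Qed.

Lemma fwd_step K y : attr K -> N K y -> ~ N0 y -> (N K)° (f y).
Proof.
move=> hK Ny Ny0; apply: contrapT => H; apply: Ny0; apply: (exitK hK).
by split.
Qed.

Lemma fwdK K (s : int -> X) a : attr K -> is_solution U f s ->
  (forall n, ~ N0 (s n)) -> N K (s a) -> forall k : nat, N K (s (a + k%:Z)).
Proof.
move=> hK hs h0 ha; elim => [|k IH]; first by rewrite addr0.
have := fwd_step hK IH (h0 _); have [_ ->] := hs (a + k%:Z).
move=> /interior_subset; congr (N K (s _)); lia.
Qed.

Lemma MS_p (K : {set P}) p : p \in K -> M p `<=` MS K.
Proof. by move=> pK x Mx; left; exists p. Qed.

Lemma MS_S (K : {set P}) : MS K `<=` S.
Proof.
case: md => _ _ subS _.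
by move=> x [ [p _ Mx]|[q _ [r _ [ [Sx _] _]]]]; [exact: subS Mx|].
Qed.

Lemma md_disj p q z : p != q -> M p z -> M q z -> False.
Proof.
case: md => disj _ _ _ pq Mp Mq.
have : (M p `&` M q) z by split.
by rewrite disj.
Qed.

Lemma MpNK K p y : attr K -> p \notin K -> M p y -> ~ N K y.
Proof.
move=> hK pK My NKy.
case: md => _ isoM _ _.
have [Np [ [cNp [NpU _]] eMp]] := isoM p.
move: (My); rewrite eMp => -[_ [s [ [hs s0] hsN]]].
have hsol : sol_in U f Np s by split.
have hMs n : M p (s n) by rewrite eMp; exact: Inv_shift.
have nN0 n : ~ N0 (s n).
  by apply: (MS_notN0 attrT); apply: (MS_p (K := [set: P]) _ (hMs n)); rewrite inE.
have fwd' (i : int) : 0 <= i -> N K (s i).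
  move=> hi; have [k ->] : exists k : nat, i = 0 + k%:Z by apply: int_ex.
  by apply: fwdK hK hs nN0 _ k; rewrite s0.
have [tau [htau cltau]] := fwd_cluster hX oU cf cNp NpU hsol.
have hMt m : M p (tau m) by rewrite eMp; exact: Inv_shift.
have tK m : N K (tau m).
  apply: (closure_sub_closed (k0 := `|m|%N) (clNK hK)) (cltau m _).
  by move=> k hk; apply: fwd'; lia.
have hsolA : sol_in U f (closure (N K `\` N0)) tau.
  split; first exact: htau.1.
  move=> n; apply: subset_closure; split; first exact: tK.
  by apply: (MS_notN0 attrT); apply: (MS_p (K := [set: P]) _ (hMt n)); rewrite inE.
have := Inv_shift 0 hsolA; rewrite (InvK hK).
case => [ [q hq Mq]|[q hq [r hr [_ [s' [_ [_ [_ hom]]]]]]]].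
  apply: (md_disj (p := p) (q := q) _ (hMt 0) Mq).
  by apply/eqP => e; move: pK; rewrite e /= hq.
have [tau' [htau' cl']] := fwd_cluster hX oU cf cNp NpU htau.
have om := omega_of htau.1 (cl' 0).
have hMt' : M p (tau' 0) by rewrite eMp; exact: Inv_shift.
apply: (md_disj (p := p) (q := r) _ hMt' (hom _ om)).
by apply/eqP => e; move: pK; rewrite e /= hr.
Qed.

Lemma S_MS : S `<=` MS [set: P].
Proof.
move=> y Sy; case: (iS) => NS [_ eS]; case: md => _ _ _ dich.
move: (Sy); rewrite eS => -[_ [s [[hs s0] hN]]].
have hS n : S (s n) by rewrite eS; apply: Inv_shift; split.
case: (dich y s (conj hs s0) hS) => [[p hp]|[p [q [pq [hom hal]]]]].
  by left; exists p; [rewrite /= inE | rewrite -s0; exact: hp 0].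
case: (pselect (M p y)) => [Mpy|nMp]; first by left; exists p; rewrite /= ?inE.
case: (pselect (M q y)) => [Mqy|nMq]; first by left; exists q; rewrite /= ?inE.
right; exists q; first by rewrite /= inE.
exists p; first by rewrite /= inE.
rewrite -eS; split; first by split; [exact: Sy | case].
exists s; split; first by split.
split => //; split => //.
by move: hom; rewrite /omega_sol s0.
Qed.

Lemma main_sec I J : attr I -> attr J -> J \subset I ->
  filtration_pair U f (MS (I :\: J)) (N I) (N J).
Proof.
move=> hI hJ sub.
set B := closure (N I `\` N J).
have NJI := monoN hJ hI sub.
have N0J := N0K hJ.
have clI := clNK hI; have clJ := clNK hJ.
have BI : B `<=` N I by apply: closure_sub_closed2 clI _ => x [].
have BA : B `<=` closure (N I `\` N0).
  by apply: closureS => x [a b]; split => // /N0J.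
have D4 x : N J x -> ~ B (f x).
  move=> Jx Bfx; case: (pselect (N0 x)) => h0.
    exact: (fN0K hI h0 (BA _ Bfx)).
  have int := fwd_step hJ Jx h0.
  by apply: (interior_closure_disj int Bfx) => y [].
have InvB_J x : Defs.Inv U f B x -> ~ N J x.
  move=> [_ [s [[hs s0] hN]]] Jx; apply: (D4 x Jx); rewrite -s0.
  by have [_ ->] := hs 0; rewrite add0r; exact: hN 1.
have InvB_I x : Defs.Inv U f B x -> MS I x.
  rewrite -(InvK hI) => -[Bx [s [hs hN]]]; split; first exact: BA.
  by exists s; split => // n; apply: BA.
have cB : compact B := subclosed_compact (@closed_closure _ _) (cNK hI) BI.
have BU : B `<=` U by move=> x /BI; exact: (NKU hI).
case: md => _ isoM _ dich.
have inIJ p z : M p z -> B z -> p \in I :\: J.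
  move=> Mz Bz; rewrite finset.in_setD; apply/andP; split.
    apply/negP => pJ; have int := MS_int hJ (MS_p pJ Mz).
    by apply: (interior_closure_disj int Bz) => y [].
  by case: (boolP (p \in I)) => // pI; exfalso; exact: MpNK hI pI Mz (BI _ Bz).
have fpI := fpK hI; have fpJ := fpK hJ.
case: fpI => cNI [_ [_ [NIU [ciI [_ [_ [hrel _]]]]]]].
case: fpJ => cNJ [_ [_ [_ [ciJ _]]]].
split => //; split => //; split => //; split => //; split => //; split => //.
split; first split.
- split; first exact: cB; split; first exact: BU.
  move=> x Invx; have hi := MS_int hI (InvB_I _ Invx).
  have nj := InvB_J _ Invx.
  apply: (@filterS _ _ _ ((N I)° `&` ~` N J)).
    by move=> y [a b]; apply: subset_closure; split => //; exact: interior_subset.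
  apply: open_nbhs_nbhs; split => //.
  by apply: openI; [exact: open_interior | rewrite openC].
- apply/seteqP; split.
  + move=> x Bx; have [Bx0 [s [[hs s0] hN]]] := Bx.
    have hsB : sol_in U f B s by split.
    have hInv n : Defs.Inv U f B (s n) := Inv_shift n hsB.
    have hS n : S (s n) := MS_S (InvB_I _ (hInv n)).
    case: (dich x s (conj hs s0) hS) => [[p hp]|[p [q [pq [hom hal]]]]].
      have Mpx : M p x by rewrite -s0; exact: hp 0.
      by left; exists p => //=; exact: inIJ Mpx Bx0.
    have [tau [htau cl]] := fwd_cluster hX oU cf cB BU hsB.
    have om := omega_of hs (cl 0).
    have pIJ : p \in I :\: J by apply: (inIJ p (tau 0)); [exact: hom | exact: htau.2].
    have [tau' [htau' cl']] := bwd_cluster hX oU cf cB BU hsB.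
    have al := alpha_of (cl' 0).
    have qIJ : q \in I :\: J by apply: (inIJ q (tau' 0)); [exact: hal | exact: htau'.2].
    case: (pselect (M p x)) => [Mpx|nMp]; first by left; exists p.
    case: (pselect (M q x)) => [Mqx|nMq]; first by left; exists q.
    right; exists q => //; exists p => //.
    split; first by split; [rewrite -s0; exact: hS 0 | case].
    exists s; split; first by split.
    split => //; split => //.
    by rewrite -s0.
  + move=> x [[p hp Mpx]|[q hq [r hr [[Sx nqr] [tau [[ht t0] [hSt [hal hom]]]]]]]].
      move: hp => /=; rewrite finset.in_setD => /andP [pnJ pI].
      have [Np [_ eMp]] := isoM p.
      move: (Mpx); rewrite eMp => -[_ [s [[hs s0] hN]]].
      have hM n : M p (s n) by rewrite eMp; exact: Inv_shift.
      rewrite -s0; apply: Inv_shift; split => // n; apply: subset_closure; split.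
        exact: interior_subset (MS_int hI (MS_p pI (hM n))).
      exact: MpNK hJ pnJ (hM n).
    move: hq hr => /=; rewrite !finset.in_setD => /andP [qnJ qI] /andP [rnJ rI].
    case: (iS) => NS [[cNS [NSU _]] eS].
    have hsolS : sol_in U f NS tau.
      by split => // n; have := hSt n; rewrite eS => -[].
    have nN0t n : ~ N0 (tau n).
      by apply: (MS_notN0 attrT); exact: S_MS.
    have hJt n : ~ N J (tau n).
      move=> Jn; have fw := fwdK hJ ht nN0t Jn.
      have [tau' [h' cl']] := fwd_cluster hX oU cf cNS NSU hsolS.
      have om := omega_of ht (cl' 0); rewrite t0 in om.
      apply: (MpNK hJ rnJ (hom _ om)).
      apply: (closure_sub_closed (k0 := `|n|%N) clJ) (cl' 0 _) => k hk.
      have [j ->] : exists j : nat, 0 + k%:Z = n + j%:Z by apply: int_ex; lia.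
      exact: fw.
    have hIt n : N I (tau n).
      apply: contrapT => nI.
      have [tau'' [h'' cl'']] := bwd_cluster hX oU cf cNS NSU hsolS.
      have al := alpha_of (cl'' 0).
      have int := MS_int hI (MS_p qI (hal _ al)).
      apply: (interior_closure_disj int (cl'' 0 `|n|%N)) => y [k hk <-] NIy.
      have [j e] : exists j : nat, n = (0 - k%:Z) + j%:Z by apply: int_ex; move: hk => /= hk; lia.
      by apply: nI; rewrite e; exact: fwdK hI ht nN0t NIy j.
    rewrite -t0; apply: Inv_shift; split => // n; apply: subset_closure.
    by split; [exact: hIt | exact: hJt].
- split.
    case: hrel => O1 [oO [eO sO]]; exists O1; split => //; split => //.
    by move=> y /sO /N0J.
  apply/seteqP; split => // y [[x Jx <-] Bfx].
  exact: D4 Jx Bfx.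
Qed.

End Main.

Unset Implicit Arguments.
Local Close Scope ring_scope.

Theorem mainTheorem15 (R : realType) (X : pseudoMetricType R)
  (U : set X) (f : X -> X) (P : finType) (lt : rel P)
  (S : set X) (M : P -> set X) (N : {set P} -> set X) (I J : {set P}) :
  hausdorff_space X -> locally_compact [set: X] ->
  open U -> {within U, continuous f} ->
  strict_partial_order lt ->
  isolated_invariant U f S ->
  morse_decomposition U f lt S M ->
  morse_set_filtration U f lt S M N ->
  attracting_interval lt I -> attracting_interval lt J -> J \subset I ->
  filtration_pair U f (morse_set U f S M (I :\: J)) (N I) (N J).
Proof.
move=> hX _ oU cf _ iS md mf hI hJ sub.
exact: (main_sec hX oU cf iS md mf hI hJ sub).
Qed.
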